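(* There is an absolute constant $c>0$ such that the following holds. Let $0<\alpha<1$, $\zeta>0$, and let $p(z)$ be a monic polynomial of degree $n$ with distinct roots $\lambda_1,\dots,\lambda_n$, all of modulus less than $\alpha$, and let $\Gamma=\Gamma(p)$. Then there exist an integer $d$ with $0\le d\le c\left(1+\max\left\{\frac{1}{1-\alpha}\log\frac{\Gamma}{(1-\alpha)\zeta},0\right\}\right)$ and a polynomial $h(z)$ of degree $d$ with leading coefficient $1$ such that for all $z\in\mathbb{C}$ with $|z|=1$, $$\left|\frac{z^{n+d}}{p(z)}-h(z)\right|\le\zeta.$$
   Context: For a polynomial $h$ of degree $n$ with distinct roots $\lambda_1,\dots,\lambda_n$ inside the unit circle, $\Gamma(h)=\sum_{j=1}^n\left|\frac{\lambda_j^n}{\prod_{i\ne j}(\lambda_i-\lambda_j)}\right|$. *)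

(* Defs.v *)
From HB Require Import structures.
From mathcomp Require Import all_boot all_order all_algebra.
From mathcomp Require Import complex.
From mathcomp Require Import reals exp Rstruct.
Set Implicit Arguments. Unset Strict Implicit. Unset Printing Implicit Defensive.
Import Order.TTheory GRing.Theory Num.Theory.
Local Open Scope ring_scope.
Local Open Scope complex_scope.

Notation RR := Rdefinitions.R.
Notation CC := (complex RR).

Definition Gamma (n : nat) (lam : 'I_n -> CC) : RR :=
  \sum_(j < n)
     complex.Re `| lam j ^+ n / \prod_(i < n | i != j) (lam i - lam j) |.

(* max{ (1/(1-alpha)) log (G/((1-alpha) zeta)), 0 }, with the convention
   log 0 = -oo (so the max is 0 when G = 0). *)
Definition dbound (alpha zeta G : RR) : RR :=
  if G == 0 then 0
  else Num.max ((1 - alpha)^-1 * ln (G / ((1 - alpha) * zeta))) 0.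

(* Main.v *)
Require Import Defs.
From HB Require Import structures.
From mathcomp Require Import all_boot all_order all_algebra.
From mathcomp Require Import complex.
From mathcomp Require Import reals exp Rstruct.
From mathcomp Require Import sequences.
From mathcomp Require Import ring lra zify.
Set Implicit Arguments. Unset Strict Implicit.
Import Order.TTheory GRing.Theory Num.Theory.
Local Open Scope ring_scope.
Local Open Scope complex_scope.



Lemma size_prodj n (lam : 'I_n -> CC) (j : 'I_n) :
  size (\prod_(i < n | i != j) ('X - (lam i)%:P)) = n.
Proof.
rewrite -big_filter size_prod_XsubC size_filter.
have := count_predC (fun i : 'I_n => i != j) (index_enum 'I_n).
have : count (predC (fun i : 'I_n => i != j)) (index_enum 'I_n) = 1%N.
  rewrite (eq_count (a2 := pred1 j)); last by move=> x /=; rewrite negbK.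
  by rewrite count_uniq_mem ?index_enum_uniq // mem_index_enum.
have E : size (index_enum 'I_n) = n by rewrite -[index_enum _]enumT size_enum_ord.
move=> H1 H2; rewrite H1 in H2.
by rewrite -addn1; exact: (etrans H2 E).
Qed.

Definition Dj n (lam : 'I_n -> CC) (j : 'I_n) : CC := \prod_(i < n | i != j) (lam j - lam i).

Lemma Dj_neq0 n (lam : 'I_n -> CC) j : injective lam -> Dj lam j != 0.
Proof.
move=> inj; apply/prodf_neq0 => i ij; rewrite subr_eq0; apply/eqP => /inj E.
by rewrite E eqxx in ij.
Qed.

Definition Lag n (lam : 'I_n -> CC) (r : {poly CC}) : {poly CC} :=
  \sum_(j < n) (r.[lam j] / Dj lam j) *: \prod_(i < n | i != j) ('X - (lam i)%:P).

Lemma Lag_eval n (lam : 'I_n -> CC) r k : injective lam -> (Lag lam r).[lam k] = r.[lam k].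
Proof.
move=> inj; rewrite /Lag horner_sum (bigD1 k) //= [X in _ + X]big1 ?addr0.
  rewrite hornerZ horner_prod.
  under eq_bigr => i _ do rewrite hornerXsubC.
  by rewrite divfK // Dj_neq0.
move=> j jk; rewrite hornerZ horner_prod (bigD1 k) 1?eq_sym //= hornerXsubC subrr.
by rewrite mul0r mulr0.
Qed.

Lemma size_Lag n (lam : 'I_n -> CC) r : (size (Lag lam r) <= n)%N.
Proof.
apply: leq_trans (size_sum _ _ _) _; apply/bigmax_leqP => j _.
by apply: leq_trans (size_scale_leq _ _) _; rewrite size_prodj.
Qed.

Lemma interp n (lam : 'I_n -> CC) (r : {poly CC}) :
  injective lam -> (size r <= n)%N -> r = Lag lam r.
Proof.
move=> inj sr; apply/eqP; rewrite -subr_eq0; apply/negPn/negP => nz.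
have := max_poly_roots nz (rs := map lam (enum 'I_n)).
rewrite map_inj_uniq ?enum_uniq // size_map size_enum_ord.
have -> : all (root (r - Lag lam r)) [seq lam i | i <- enum 'I_n].
  by apply/allP => x /mapP [k _ ->]; rewrite /root hornerD hornerN Lag_eval // subrr.
move=> /(_ isT isT); apply/negP; rewrite -leqNgt.
apply: leq_trans (size_polyD _ _) _; rewrite size_polyN geq_max sr size_Lag //.
Qed.

Lemma dbound_ge0 (alpha zeta G : RR) : 0 <= dbound alpha zeta G.
Proof. by rewrite /dbound; case: ifP => // _; rewrite le_max lexx orbT. Qed.

Lemma real_part (alpha zeta G : RR) : 0 < alpha -> alpha < 1 -> 0 < zeta -> 0 <= G ->
  ((Num.truncn (dbound alpha zeta G)).+1%:R <= 1 + dbound alpha zeta G) /\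
  G * alpha ^+ (Num.truncn (dbound alpha zeta G)).+1 / (1 - alpha) <= zeta.
Proof.
move=> a0 a1 z0 G0.
set m := dbound alpha zeta G.
have m0 := dbound_ge0 alpha zeta G.
have [tl tu] := andP (truncn_itv m0).
set d := (Num.truncn m).+1.
split; first by rewrite /d -addn1 natrD addrC lerD2l.
have [->|Gn0] := eqVneq G 0; first by rewrite !mul0r ltW.
have Gp : 0 < G by rewrite lt_def Gn0.
have a1p : 0 < 1 - alpha by rewrite subr_gt0.
set y := G / ((1 - alpha) * zeta).
have yp : 0 < y by rewrite divr_gt0 // mulr_gt0.
have mt : (1 - alpha)^-1 * ln y <= m.
  by rewrite /m /dbound (negbTE Gn0) le_max lexx.
have dt : ln y <= d%:R * (1 - alpha).
  have : (1 - alpha)^-1 * ln y <= d%:R by apply: le_trans mt (ltW tu).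
  by rewrite ler_pdivrMl // mulrC.
have ad : alpha ^+ d <= y^-1.
  apply: (@le_trans _ _ (expR (alpha - 1) ^+ d)).
    apply: lerXn2r; first by rewrite nnegrE ltW.
      by rewrite nnegrE expR_ge0.
    by have := expR_ge1Dx (alpha - 1); rewrite addrC subrK.
  rewrite -(expRM_natl d) -(lnK yp) -expRN ler_expR.
  by rewrite -opprB mulrN lerN2.
apply: (@le_trans _ _ (G * y^-1 / (1 - alpha))).
  by rewrite ler_pM2r ?invr_gt0 // ler_pM2l.
rewrite /y invfM invrK. 
have : (1 - alpha) != 0 by rewrite gt_eqF.
move=> h; rewrite le_eqVlt; apply/orP; left; apply/eqP; field.
by rewrite Gn0 h.
Qed.

Lemma C_div_exp (a b : RR) d : (a ^+ d / b)%:C = (a%:C) ^+ d / (b%:C).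
Proof. by rewrite rmorphM /= fmorphV rmorphXn. Qed.

Lemma ReC (w : CC) : ((complex.Re `|w|)%:C) = `|w|.
Proof. by rewrite normc_def. Qed.

Lemma size_P n (lam : 'I_n -> CC) : size (\prod_(i < n) ('X - (lam i)%:P)) = n.+1.
Proof. by rewrite size_prod_XsubC -[index_enum _]enumT size_enum_ord. Qed.

Theorem lemma5p5 :
  exists c : RR, 0 < c /\
  forall (alpha zeta : RR) (n : nat) (lam : 'I_n -> CC) (p : {poly CC}),
    0 < alpha -> alpha < 1 -> 0 < zeta ->
    injective lam ->
    (forall i, `|lam i| < alpha%:C) ->
    p = \prod_(i < n) ('X - (lam i)%:P) ->
    exists (d : nat) (h : {poly CC}),
      d%:R <= c * (1 + dbound alpha zeta (Gamma lam)) /\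
      size h = d.+1 /\ h \is monic /\
      (forall z : CC, `|z| = 1 ->
         `| z ^+ (n + d) / p.[z] - h.[z] | <= zeta%:C).
Proof.
exists 1; split; first exact: ltr01.
move=> alpha zeta n lam p a0 a1 z0 inj lamlt ->.
set P := \prod_(i < n) ('X - (lam i)%:P).
set G := Gamma lam.
have G0 : 0 <= G.
  apply: sumr_ge0 => j _; rewrite normc_def /=; exact: sqrtr_ge0.
have [dle bound] := real_part a0 a1 z0 G0.
set d := (Num.truncn (dbound alpha zeta G)).+1 in dle bound *.
have Pm : P \is monic by apply: monic_prod_XsubC.
have P0 : P != 0 by apply: monic_neq0.
have sP : size P = n.+1 by apply: size_P.
set h := 'X^(n + d) %/ P.
set r := 'X^(n + d) %% P.
have Peq : 'X^(n + d) = h * P + r by apply: divp_eq.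
have sr : (size r <= n)%N by have := ltn_modpN0 ('X^(n + d)) P0; rewrite sP.
exists d, h; split; first by rewrite mul1r.
have sh : size h = d.+1.
  by rewrite size_divp // size_polyXn sP /=; lia.
split; first exact: sh.
split.
  apply/monicP.
  have : lead_coef (h * P) = 1.
    have -> : h * P = 'X^(n + d) - r by rewrite Peq addrK.
    have sl : (size (- r) < size ('X^(n+d) : {poly CC}))%N.
      by rewrite size_polyN size_polyXn ltnS (leq_trans sr) ?leq_addr.
    by rewrite lead_coefDl // lead_coefXn.
  by rewrite lead_coefM (monicP Pm) mulr1.
move=> z z1.
have a1C : 0 < (1 - alpha)%:C by rewrite ltcR subr_gt0.
have zl i : (1 - alpha)%:C <= `|z - lam i|.
  apply: le_trans (lerB_dist _ _); rewrite z1 rmorphB /= rmorph1 lerD2l lerN2.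
  exact: ltW.
have zn0 i : z - lam i != 0.
  by rewrite -normr_gt0; apply: lt_le_trans (zl i).
have Pz : P.[z] = \prod_(i < n) (z - lam i).
  by rewrite /P horner_prod; apply: eq_bigr => i _; rewrite hornerXsubC.
have Pz0 : P.[z] != 0 by rewrite Pz; apply/prodf_neq0 => i _.
have E1 : z ^+ (n + d) / P.[z] - h.[z] = r.[z] / P.[z].
  have : ('X^(n + d)).[z] = (h * P + r).[z] by rewrite -Peq.
  rewrite hornerXn hornerD hornerM => ->.
  by rewrite mulrDl mulfK // addrC addKr.
have rl j : r.[lam j] = lam j ^+ (n + d).
  have : ('X^(n + d)).[lam j] = (h * P + r).[lam j] by rewrite -Peq.
  rewrite hornerXn hornerD hornerM => ->.
  rewrite /P horner_prod (bigD1 j) //= hornerXsubC subrr mul0r mulr0 add0r //.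
have E2 : r.[z] / P.[z] = \sum_(j < n) lam j ^+ (n + d) / (Dj lam j * (z - lam j)).
  rewrite {1}(interp inj sr) /Lag horner_sum mulr_suml; apply: eq_bigr => j _.
  rewrite hornerZ rl horner_prod.
  under eq_bigr => i _ do rewrite hornerXsubC.
  rewrite Pz [X in _ / X](bigD1 j) //=.
  set Q := \prod_(i < n | i != j) (z - lam i).
  have Q0 : Q != 0 by apply/prodf_neq0 => i _.
  by rewrite [X in _ / X]mulrC invfM !mulrA mulfK // invfM mulrA.

rewrite E1 E2.
apply: le_trans (ler_norm_sum _ _ _) _.
set K := (alpha ^+ d / (1 - alpha))%:C.
have K0 : 0 <= K by rewrite lecR divr_ge0 ?exprn_ge0 ?ltW // subr_gt0.
apply: (@le_trans _ _ (\sum_(j < n) `|lam j ^+ n / Dj lam j| * K)).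
  apply: ler_sum => j _.
  rewrite exprD invfM !normrM normfV normrX mulrACA.
  rewrite ler_wpM2l ?mulr_ge0 ?invr_ge0 ?exprn_ge0 ?normr_ge0 // normrX normfV.
  rewrite /K C_div_exp.
  have lp : 0 < `|z - lam j| by apply: lt_le_trans (zl j).
  apply: ler_pM.
  - by rewrite exprn_ge0 ?normr_ge0.
  - by rewrite invr_ge0 normr_ge0.
  - apply: lerXn2r.
    + by rewrite nnegrE normr_ge0.
    + by rewrite nnegrE ltW // (le_lt_trans (normr_ge0 _) (lamlt j)).
    + exact: ltW.
  - by rewrite lef_pV2 ?posrE // (lt_le_trans a1C (zl j)).
rewrite -mulr_suml.
have GC : G%:C = \sum_(j < n) `|lam j ^+ n / Dj lam j|.
  rewrite /G /Gamma rmorph_sum; apply: eq_bigr => j _.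
  transitivity `|lam j ^+ n / \prod_(i < n | i != j) (lam i - lam j)|; first exact: ReC.
  rewrite !normrM !normfV /Dj !normr_prod; congr (_ * (_)^-1).
  by apply: eq_bigr => i _; exact: distrC.
by rewrite -GC /K -rmorphM lecR mulrA.
Qed.
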